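(* For $k\ge0$ let $\bar H_k\in\mathbb{R}^{p\times p}$ be (random) symmetric matrices with symmetric indefinite factorizations $\bar H_k=P_k^TL_kB_kL_k^TP_k$, and suppose $\bar H_k\to H(\theta^* )$ a.s., where $H(\theta^* )$ is positive definite. Let $B_k=Q_k\Lambda_kQ_k^T$ be an eigendecomposition, $\Lambda_k=\mathrm{diag}(\lambda_{k1},\dots,\lambda_{kp})$, and with a constant threshold $\underline{\tau}$ set $\bar\Lambda_k=\mathrm{diag}(\max\{\underline{\tau},|\lambda_{kj}|\})_{j=1}^p$ and $\bar{\bar H}_k=P_k^TL_kQ_k\bar\Lambda_kQ_k^TL_k^TP_k$. If $0<\underline{\tau}\le\lambda_{\min}(H(\theta^* ))/(2\bar\sigma^2)$, then there exists $K_1$ such that $\bar{\bar H}_k=\bar H_k$ for all $k>K_1$.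
   Context: In the factorization: $P_k$ permutation, $B_k$ block diagonal with symmetric $1\times1$ or $2\times2$ blocks, $L_k$ unit lower triangular with entries bounded in magnitude by a fixed constant independent of $k$. $\bar\sigma$ is a constant, independent of $k$ and the sample path, with $\sigma_{\max}(L_k)\le\bar\sigma$ for all $k$ (largest singular value). $H(\theta^* )$ is the Hessian of the loss at its minimizer $\theta^*$ and $\bar H_k$ is the running Hessian estimate of a second-order simultaneous-perturbation stochastic approximation algorithm. *)

(* Defs.v *)
From HB Require Import structures.
From mathcomp Require Import all_boot all_order all_algebra.
From mathcomp Require Import all_classical all_reals all_analysis.
Set Implicit Arguments. Unset Strict Implicit. Unset Printing Implicit Defensive.
Import Order.TTheory GRing.Theory Num.Theory.
Local Open Scope ring_scope.
Local Open Scope classical_set_scope.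

Section Defs.
Variable R : realType.

Definition norm2 (p : nat) (x : 'cV[R]_p) : R :=
  Num.sqrt (\sum_(i < p) x i 0 ^+ 2).

Definition sigma_max (m n : nat) (A : 'M[R]_(m, n)) : R :=
  sup [set norm2 (A *m x) | x in [set x : 'cV[R]_n | norm2 x = 1]].

Definition lambda_min (p : nat) (H : 'M[R]_p) : R :=
  inf [set a : R | eigenvalue H a].

Definition symmetric_mx (p : nat) (A : 'M[R]_p) := A^T = A.

Definition posdef_mx (p : nat) (A : 'M[R]_p) :=
  symmetric_mx A /\ forall x : 'cV[R]_p, x != 0 -> 0 < (x^T *m A *m x) 0 0.

Definition unit_lower (p : nat) (L : 'M[R]_p) :=
  (forall i : 'I_p, L i i = 1) /\ (forall i j : 'I_p, (i < j)%N -> L i j = 0).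

(* Block index of position i for a list of consecutive block sizes s. *)
Definition blk (s : seq nat) (i : nat) : nat := count (fun t => t <= i)%N (scanl addn 0%N s).

Definition block12_diag (p : nat) (B : 'M[R]_p) :=
  symmetric_mx B /\
  exists s : seq nat, all (fun b => (b == 1) || (b == 2))%N s /\ sumn s = p /\
    forall i j : 'I_p, blk s i <> blk s j -> B i j = 0.

Definition modified_H (p : nat) (tau : R) (P L Q : 'M[R]_p) (lam : 'rV[R]_p) : 'M[R]_p :=
  P^T *m L *m Q *m diag_mx (\row_j Num.max tau `|lam 0 j|) *m Q^T *m L^T *m P.

End Defs.

(* Main.v *)
Require Import Defs.
From HB Require Import structures.
From mathcomp Require Import all_boot all_order all_algebra.
From mathcomp Require Import all_classical all_reals all_analysis.
From mathcomp Require Import perm fingroup.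
From mathcomp.algebra_tactics Require Import ring lra.
Import Order.TTheory GRing.Theory Num.Theory.
Import numFieldNormedType.Exports.
Local Open Scope ring_scope.
Local Open Scope classical_set_scope.
Set Implicit Arguments. Unset Strict Implicit. Unset Printing Implicit Defensive.

Section Helpers.
Variable R : realType.

Definition sq n (x : 'cV[R]_n) : R := \sum_i x i 0 ^+ 2.
Definition dot n (x y : 'cV[R]_n) : R := \sum_i x i 0 * y i 0.
Definition qf n (H : 'M[R]_n) (x : 'cV[R]_n) : R := (x^T *m H *m x) 0 0.

Lemma dotE n (x y : 'cV[R]_n) : (x^T *m y) 0 0 = dot x y.
Proof. by rewrite mxE; apply: eq_bigr => i _; rewrite mxE. Qed.

Lemma sqE n (x : 'cV[R]_n) : (x^T *m x) 0 0 = sq x.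
Proof. by rewrite dotE; apply: eq_bigr => i _; rewrite expr2. Qed.

Lemma sq_ge0 n (x : 'cV[R]_n) : 0 <= sq x.
Proof. by apply: sumr_ge0 => i _; rewrite sqr_ge0. Qed.

Lemma sq_eq0 n (x : 'cV[R]_n) : sq x = 0 -> x = 0.
Proof.
move=> /eqP; rewrite psumr_eq0; last by move=> i _; rewrite sqr_ge0.
move=> /allP H; apply/matrixP => i j; rewrite ord1 mxE.
by have := H i (mem_index_enum i); rewrite implyTb sqrf_eq0 => /eqP.
Qed.

Lemma sq_coord n (x : 'cV[R]_n) i : x i 0 ^+ 2 <= sq x.
Proof.
rewrite /sq (bigD1 i) //= lerDl; apply: sumr_ge0 => j _; exact: sqr_ge0.
Qed.

Lemma sqZB n (a : R) (x y : 'cV[R]_n) :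
  sq (a *: x - y) = a ^+ 2 * sq x - 2 * a * dot x y + sq y.
Proof.
rewrite /sq /dot !mulr_sumr -sumrB -big_split /=; apply: eq_bigr => i _.
rewrite !mxE; ring.
Qed.

Lemma sqZ n (a : R) (x : 'cV[R]_n) : sq (a *: x) = a ^+ 2 * sq x.
Proof. by rewrite /sq mulr_sumr; apply: eq_bigr => i _; rewrite mxE exprMn. Qed.

Lemma LT_bound n (L : 'M[R]_n) (s : R) : 0 < s ->
  (forall x, sq (L *m x) <= s ^+ 2 * sq x) ->
  forall w, sq (L^T *m w) <= s ^+ 2 * sq w.
Proof.
move=> s0 HL w; set u := L^T *m w.
have e1 : sq u = dot w (L *m u).
  rewrite -sqE -dotE; rewrite {1}/u trmx_mul trmxK mulmxA //.
have h1 := sq_ge0 (s ^+ 2 *: w - L *m u).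
rewrite sqZB -e1 in h1.
have h2 := HL u.
have s2 : 0 < s ^+ 2 by rewrite exprn_gt0.
rewrite -(ler_pM2l s2); nra.
Qed.


Lemma sq_delta n : sq (delta_mx (ord0 : 'I_n.+1) (ord0 : 'I_1)) = 1.
Proof.
rewrite /sq (bigD1 ord0) //= big1 ?addr0; first by rewrite mxE !eqxx expr1n.
by move=> i /negbTE Hi; rewrite mxE Hi /= expr0n.
Qed.

Lemma sigma_bound n (L : 'M[R]_n.+1) (s : R) : sigma_max L <= s ->
  forall x, sq (L *m x) <= s ^+ 2 * sq x.
Proof.
move=> Hs.
set S := [set norm2 (L *m x) | x in [set x : 'cV[R]_n.+1 | norm2 x = 1]].
have unit_sq (x : 'cV[R]_n.+1) : norm2 x = 1 -> sq x = 1.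
  move=> h; rewrite -(sqr_sqrtr (sq_ge0 x)).
  by rewrite [Num.sqrt _]h expr1n.
have hS : has_sup S.
  split.
    exists (norm2 (L *m delta_mx ord0 ord0)); exists (delta_mx ord0 ord0) => //.
    by rewrite /= /norm2; have := sq_delta n; rewrite /sq => ->; exact: sqrtr1.
  exists (Num.sqrt (\sum_i (\sum_j `|L i j|) ^+ 2)).
  move=> _ [x /unit_sq hx <-]; rewrite /norm2 ler_sqrt; last first.
    by apply: sumr_ge0 => i _; apply: sqr_ge0.
  apply: ler_sum => i _.
  have hi : `|(L *m x) i 0| <= \sum_j `|L i j|.
    rewrite mxE; apply: le_trans (ler_norm_sum _ _ _) _.
    apply: ler_sum => j _; rewrite normrM.
    have := sq_coord x j; rewrite hx => hj.
    have hj' : `|x j 0| <= 1 by rewrite ler_norml; apply/andP; split; nra.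
    by rewrite -[leRHS]mulr1 ler_wpM2l.
  have h0 := normr_ge0 ((L *m x) i 0).
  rewrite -(real_normK (num_real _)); nra.
have hsup : sup S <= s by [].
move=> x; have [x0|xn0] := eqVneq (sq x) 0.
  have sq0 : sq (0 : 'cV[R]_n.+1) = 0 by rewrite /sq big1 // => i _; rewrite mxE expr0n.
  by rewrite (sq_eq0 x0) mulmx0 sq0 mulr0.
have xpos : 0 < sq x by rewrite lt_def xn0 sq_ge0.
set r := Num.sqrt (sq x).
have r0 : 0 < r by rewrite sqrtr_gt0.
have r2 : r ^+ 2 = sq x by rewrite sqr_sqrtr // sq_ge0.
set y := r^-1 *: x.
have hy : norm2 y = 1.
  rewrite /norm2 -/(sq y) /y sqZ -r2 exprVn mulVf ?sqrtr1 //.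
  by rewrite expf_neq0 // gt_eqF.
have hLy : norm2 (L *m y) <= s.
  apply: le_trans hsup; apply: sup_upper_bound => //; by exists y.
have h1 : sq (L *m y) <= s ^+ 2.
  have h0 : 0 <= norm2 (L *m y) by apply: sqrtr_ge0.
  have := sqr_sqrtr (sq_ge0 (L *m y)); rewrite -/(norm2 _) => <-.
  nra.
move: h1; rewrite /y -scalemxAr sqZ exprVn -r2.
have rr : 0 < r ^+ 2 by rewrite exprn_gt0.
move=> h.
have e : sq (L *m x) = r ^+ 2 * (r ^+ 2)^-1 * sq (L *m x).
  by rewrite mulfV ?mul1r // gt_eqF.
by rewrite e -mulrA [s ^+ 2 * _]mulrC ler_pM2l.
Qed.


Lemma cont_sum (T : topologicalType) m (g : 'I_m -> T -> R) :
  (forall i, continuous (g i)) -> continuous (fun x => \sum_(i < m) g i x).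
Proof.
elim: m g => [|m IH] g hg.
  rewrite (_ : (fun x => _) = fun=> 0); first exact: cst_continuous.
  by apply: funext => x; rewrite big_ord0.
rewrite (_ : (fun x => _) = fun x => \sum_(i < m) g (widen_ord (leqnSn m) i) x + g ord_max x).
  move=> x; apply: cvgD; first exact: (IH (fun i => g (widen_ord (leqnSn m) i))).
  exact: hg.
by apply: funext => x; rewrite big_ord_recr.
Qed.

Lemma qf_row n (H : 'M[R]_n) (v : 'rV[R]_n) :
  qf H v^T = \sum_j (\sum_i v 0 i * H i j) * v 0 j.
Proof.
rewrite /qf trmxK mxE; apply: eq_bigr => j _; rewrite !mxE.
by congr (_ * _); apply: eq_bigr => i _; rewrite mxE.
Qed.

Lemma minimizer n (H : 'M[R]_n.+1) :
  exists2 c : 'cV[R]_n.+1, sq c = 1 &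
    forall y : 'cV[R]_n.+1, sq y = 1 -> qf H c <= qf H y.
Proof.
pose g (v : 'rV[R]_n.+1) := \sum_i v 0 i ^+ 2.
pose S : set 'rV[R]_n.+1 := g @^-1` [set 1].
pose f (v : 'rV[R]_n.+1) := qf H v^T.
have gc : continuous g.
  rewrite /g; apply: cont_sum => i x.
  rewrite (_ : (fun v => _) = fun v : 'rV[R]_n.+1 => v 0 i * v 0 i); last first.
    by apply: funext => v; rewrite expr2.
  exact: (cvgM (@coord_continuous R 1 n.+1 0 i x) (@coord_continuous R 1 n.+1 0 i x)).
have fc : continuous f.
  rewrite /f (_ : (fun v => _) = fun v : 'rV[R]_n.+1 => \sum_j (\sum_i v 0 i * H i j) * v 0 j).
    have hj j : continuous (fun v : 'rV[R]_n.+1 => \sum_i v 0 i * H i j).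
      apply: (@cont_sum 'rV[R]_n.+1 n.+1 (fun i v => v 0 i * H i j)) => i y.
      apply: continuousM; [exact: (@coord_continuous R 1 n.+1 0 i y) | exact: cst_continuous].
    apply: (@cont_sum 'rV[R]_n.+1 n.+1 (fun j v => (\sum_i v 0 i * H i j) * v 0 j)) => j x.
    exact: (cvgM (hj j x) (@coord_continuous R 1 n.+1 0 j x)).
  by apply: funext => v; rewrite qf_row.
have gT (y : 'cV[R]_n.+1) : g y^T = sq y.
  by apply: eq_bigr => i _; rewrite mxE.
have S0 : S !=set0.
  exists (delta_mx ord0 ord0 : 'cV[R]_n.+1)^T; rewrite /S /= gT.
  exact: sq_delta.
have Scl : closed S.
  apply: preimage_closed; first by move=> x _; apply: gc.
  exact: closed_eq.
have Sb : bounded_set S.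
  rewrite /bounded_set /= /bounded_near; near=> M => v /= Sv.
  have h1 : `|v| <= 1.
    change (mx_norm v <= 1); rewrite mx_normrE; apply: bigmax_le => // -[i j] _ /=.
    rewrite ord1.
    have : v 0 j ^+ 2 <= 1.
      rewrite -Sv /g (bigD1 j) //= lerDl; apply: sumr_ge0 => k _; exact: sqr_ge0.
    move=> h; rewrite ler_norml; apply/andP; split; nra.
  apply: le_trans h1 _; near: M; apply: nbhs_pinfty_ge; exact: num_real.
have Sc : compact S by apply: bounded_closed_compact.
have [c cS cmin] := compact_EVT_min S0 Sc (continuous_subspaceT fc).
exists c^T.
  by rewrite -gT trmxK; move: cS; rewrite in_setE.
move=> y hy; have := cmin y^T; rewrite /f !trmxK; apply.
by rewrite in_setE /S /= gT.
Unshelve. all: by end_near.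
Qed.


Lemma qfZ n (H : 'M[R]_n) a y : qf H (a *: y) = a ^+ 2 * qf H y.
Proof.
  by rewrite /qf linearZ /= linearZ /= -!scalemxAl !mxE mulrA expr2.
Qed.

Lemma qf0 n (H : 'M[R]_n) : qf H 0 = 0.
Proof. by rewrite /qf mulmx0 mxE. Qed.

Lemma qf_sub n (H : 'M[R]_n) mu y : qf (H - mu%:M) y = qf H y - mu * sq y.
Proof.
rewrite /qf mulmxBr mulmxBl mul_mx_scalar -scalemxAl.
have e (A B : 'M[R]_1) : (A - B) 0 0 = A 0 0 - B 0 0 by rewrite !mxE.
by rewrite e [X in _ - X]mxE sqE.
Qed.

Lemma qfD n (M : 'M[R]_n) c w t : M^T = M ->
  qf M (c + t *: w) = qf M c + 2 * t * (w^T *m M *m c) 0 0 + t ^+ 2 * qf M w.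
Proof.
move=> Ms.
have e : (c^T *m M *m w) 0 0 = (w^T *m M *m c) 0 0.
  have tr1 (A : 'M[R]_1) : A 0 0 = A^T 0 0 by rewrite mxE.
  by rewrite tr1 !trmx_mul trmxK Ms mulmxA.
have eT : (c + t *: w)^T = c^T + t *: w^T by rewrite linearD /= linearZ.
have aE (A B : 'M[R]_1) : (A + B) 0 0 = A 0 0 + B 0 0 by rewrite mxE.
have sE (a : R) (A : 'M[R]_1) : (a *: A) 0 0 = a * A 0 0 by rewrite mxE.
rewrite /qf eT !mulmxDl !mulmxDr -!scalemxAl -!scalemxAr !aE !sE e.
set u := (w^T *m M *m c) 0 0; rewrite expr2; lra.
Qed.

Lemma rayleigh n (H : 'M[R]_n.+1) : symmetric_mx H ->
  forall x, lambda_min H * sq x <= qf H x.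
Proof.
move=> Hsym x.
have [c c1 cmin] := minimizer H.
set mu := qf H c.
have Hmu y : mu * sq y <= qf H y.
  have [y0|yn0] := eqVneq (sq y) 0.
    by rewrite y0 mulr0 (sq_eq0 y0) qf0.
  have ypos : 0 < sq y by rewrite lt_def yn0 sq_ge0.
  set r := Num.sqrt (sq y).
  have r0 : 0 < r by rewrite sqrtr_gt0.
  have r2 : r ^+ 2 = sq y by rewrite sqr_sqrtr // sq_ge0.
  have := cmin (r^-1 *: y); rewrite qfZ sqZ exprVn r2 mulVf //.
  move=> /(_ erefl) h.
  have e : qf H y = sq y * ((sq y)^-1 * qf H y).
    by rewrite mulrA mulfV ?mul1r.
  by rewrite e mulrC ler_pM2l.
set M := H - mu%:M.
have Mpos y : 0 <= qf M y by rewrite /M qf_sub subr_ge0.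
have Mc : qf M c = 0 by rewrite /M qf_sub c1 mulr1 /mu subrr.
have Msym : M^T = M.
  by rewrite /M linearB /= tr_scalar_mx Hsym.
set w := M *m c.
have eb : (w^T *m M *m c) 0 0 = sq w by rewrite -mulmxA -/w sqE.
have hq t : 0 <= 2 * t * sq w + t ^+ 2 * qf M w.
  by have := Mpos (c + t *: w); rewrite qfD // Mc eb add0r.
have a0 := Mpos w.
have b0 : sq w = 0.
  set b := sq w; set a := qf M w.
  have hb : 0 <= b by apply: sq_ge0.
  have := hq (- b / (a + 1)).
  have a0' : 0 <= a := a0.
  have a1 : 0 < a + 1 by lra.
  set t := - b / (a + 1).
  have et : t * (a + 1) = - b by rewrite /t mulrAC -mulrA mulfV ?gt_eqF // mulr1.
  move=> h.
  have h2 : 0 <= (2 * t * b + t ^+ 2 * a) * (a + 1) ^+ 2.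
    by apply: mulr_ge0 => //; apply: sqr_ge0.
  have e2 : (2 * t * b + t ^+ 2 * a) * (a + 1) ^+ 2 = - (b ^+ 2 * (a + 2)).
    have -> : (2 * t * b + t ^+ 2 * a) * (a + 1) ^+ 2 =
      2 * (t * (a + 1)) * b * (a + 1) + (t * (a + 1)) ^+ 2 * a by ring.
    rewrite et; ring.
  rewrite e2 oppr_ge0 in h2.
  have a2 : 0 < a + 2 by lra.
  have : b ^+ 2 <= 0 by rewrite -(ler_pM2r a2) mul0r.
  by move=> hb2; apply/eqP; rewrite -sqrf_eq0 eq_le hb2 sqr_ge0.
have Hc : H *m c = mu *: c.
  apply/eqP; rewrite -subr_eq0 -mul_scalar_mx -mulmxBl -/M -/w.
  by rewrite (sq_eq0 b0).
have mu_eig : eigenvalue H mu.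
  apply/eigenvalueP; exists c^T.
    by rewrite -{1}Hsym -trmx_mul Hc linearZ.
  apply/eqP => /(congr1 trmx); rewrite trmxK linear0 => c0.
  have : sq c = 0 by rewrite c0 /sq big1 // => i _; rewrite mxE expr0n.
  by rewrite c1 => /eqP; rewrite oner_eq0.
have lb a : eigenvalue H a -> mu <= a.
  move=> /eigenvalueP [v hv vn0].
  have hq2 := Hmu v^T.
  have e1 : qf H v^T = a * sq v^T.
    have sE (b : R) (A : 'M[R]_1) : (b *: A) 0 0 = b * A 0 0 by rewrite mxE.
    by rewrite /qf trmxK hv -scalemxAl sE -sqE trmxK.
  rewrite e1 in hq2.
  have sp : 0 < sq v^T.
    rewrite lt_def sq_ge0 andbT; apply/eqP => /sq_eq0 /(congr1 trmx).
    by rewrite trmxK linear0; apply/eqP.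
  by rewrite -(ler_pM2r sp).
have hinf : lambda_min H <= mu.
  apply: ge_inf => //; exists mu => a /= ha; exact: lb.
apply: le_trans (Hmu x); apply: ler_wpM2r => //; exact: sq_ge0.
Qed.


Lemma sq_deltaj n (j : 'I_n) : sq (delta_mx j (0 : 'I_1)) = 1.
Proof.
rewrite /sq (bigD1 j) //= big1 ?addr0; first by rewrite mxE !eqxx expr1n.
by move=> i /negbTE Hi; rewrite mxE Hi /= expr0n.
Qed.

Lemma qf_delta n (D : 'M[R]_n) j : qf D (delta_mx j (0 : 'I_1)) = D j j.
Proof.
by rewrite /qf trmx_delta -rowE -colE !mxE.
Qed.

Lemma qf_lower n (D : 'M[R]_n) e z : (forall i j, `|D i j| <= e) ->
  - (n%:R ^+ 2 * e * sq z) <= qf D z.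
Proof.
move=> hD.
have e0 : qf D z = \sum_j \sum_i z i 0 * D i j * z j 0.
  rewrite /qf mxE; apply: eq_bigr => j _; rewrite mxE mulr_suml.
  by apply: eq_bigr => i _; rewrite mxE.
have hz i j : `|z i 0| * `|z j 0| <= sq z.
  have := sq_coord z i; have := sq_coord z j.
  rewrite -(real_normK (num_real (z i 0))) -(real_normK (num_real (z j 0))).
  have := normr_ge0 (z i 0); have := normr_ge0 (z j 0).
  move=> *; nra.
have hb : `|qf D z| <= n%:R ^+ 2 * e * sq z.
  rewrite e0; apply: le_trans (ler_norm_sum _ _ _) _.
  apply: (@le_trans _ _ (\sum_(j < n) \sum_(i < n) e * sq z)).
    apply: ler_sum => j _; apply: le_trans (ler_norm_sum _ _ _) _.
    apply: ler_sum => i _; rewrite !normrM.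
    rewrite mulrAC mulrC; apply: ler_pM; [exact: normr_ge0 | apply: mulr_ge0; exact: normr_ge0 | exact: hD | exact: hz].
  by rewrite !sumr_const !card_ord -mulrnA mulnn -mulrA -natrX mulr_natl.
by move: hb; rewrite ler_norml => /andP[].
Qed.


Lemma qfB n (A C : 'M[R]_n) z : qf (A - C) z = qf A z - qf C z.
Proof.
rewrite /qf mulmxBr mulmxBl.
have e (X Y : 'M[R]_1) : (X - Y) 0 0 = X 0 0 - Y 0 0 by rewrite !mxE.
exact: e.
Qed.

Lemma qf_conj n (Q D : 'M[R]_n) x : Q^T *m Q = 1%:M ->
  qf (Q *m D *m Q^T) (Q *m x) = qf D x.
Proof.
move=> QQ; rewrite /qf trmx_mul.
have -> : x^T *m Q^T *m (Q *m D *m Q^T) *m (Q *m x)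
  = x^T *m (Q^T *m Q) *m D *m (Q^T *m Q) *m x by rewrite !mulmxA.
by rewrite QQ !mulmx1.
Qed.

Lemma qf_fact n (P L B : 'M[R]_n) z :
  qf (P^T *m L *m B *m L^T *m P) z = qf B (L^T *m (P *m z)).
Proof. by rewrite /qf !trmx_mul !trmxK !mulmxA. Qed.

End Helpers.

Theorem theoremA3 (R : realType) (p : nat)
  (Hbar : nat -> 'M[R]_p) (Hstar : 'M[R]_p)
  (P L B Q : nat -> 'M[R]_p) (lam : nat -> 'rV[R]_p)
  (sigma_bar tau : R) :
  (forall k, symmetric_mx (Hbar k)) ->
  (forall k, is_perm_mx (P k)) ->
  (forall k, unit_lower (L k)) ->
  (exists c : R, forall k (i j : 'I_p), `|L k i j| <= c) ->
  (forall k, sigma_max (L k) <= sigma_bar) ->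
  (forall k, block12_diag (B k)) ->
  (forall k, Hbar k = (P k)^T *m L k *m B k *m (L k)^T *m P k) ->
  (forall i j : 'I_p, (fun k => Hbar k i j : R) @ \oo --> (Hstar i j : R)) ->
  posdef_mx Hstar ->
  (forall k, (Q k)^T *m Q k = 1%:M) ->
  (forall k, B k = Q k *m diag_mx (lam k) *m (Q k)^T) ->
  0 < tau -> tau <= lambda_min Hstar / (2 * sigma_bar ^+ 2) ->
  exists K1 : nat, forall k : nat, (K1 < k)%N ->
    modified_H tau (P k) (L k) (Q k) (lam k) = Hbar k.
Proof.
move=> _ Pperm Lunit _ Lsig _ Hfac Hconv Hpd QQ BQ tau0 tauH.
destruct p as [|n].
  by exists 0%N => k _; apply/matrixP => -[].
set lmin := lambda_min Hstar in tauH.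
set s2 := sigma_bar ^+ 2 in tauH.
have s2pos : 0 < s2.
  rewrite lt_def sqr_ge0 andbT; apply/eqP => s0.
  by move: tauH; rewrite s0 mulr0 invr0 mulr0; rewrite leNgt tau0.
have tauH' : tau * (2 * s2) <= lmin.
  by rewrite -ler_pdivlMr // pmulr_rgt0.
have lpos : 0 < lmin.
  apply: lt_le_trans tauH'; apply: mulr_gt0 => //; apply: mulr_gt0 => //.
have Hray := rayleigh (proj1 Hpd).
set eps := lmin / (2 * n.+1%:R ^+ 2).
have eps0 : 0 < eps.
  by apply: divr_gt0 => //; apply: mulr_gt0 => //; apply: exprn_gt0.
have Hev : \forall k \near \oo, forall ij : 'I_n.+1 * 'I_n.+1,
    `|Hstar ij.1 ij.2 - Hbar k ij.1 ij.2| < eps.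
  apply: filter_forall => -[i j].
  by move/cvgrPdist_lt: (Hconv i j) => /(_ eps eps0).
have [N _ HN] := Hev.
exists N => k hk.
have Hk := HN k (ltnW hk).
have Hlow z : lmin / 2 * sq z <= qf (Hbar k) z.
  have hD i j : `|(Hbar k - Hstar) i j| <= eps.
    rewrite !mxE distrC; apply: ltW; exact: (Hk (i, j)).
  have h1 := qf_lower z hD.
  have ee : n.+1%:R ^+ 2 * eps = lmin / 2.
    rewrite /eps; field; rewrite addrC natr1 pnatr_eq0 //.
  rewrite ee qfB in h1.
  have h2 := Hray z; rewrite -/lmin in h2.
  lra.
have Lu := Lunit k.
have Ltrig : is_trig_mx (L k).
  apply/forallP => i; apply/forallP => j; apply/implyP => hij; apply/eqP.
  exact: Lu.2 i j hij.
have Ldet : \det (L k) = 1.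
  by rewrite det_trig // big1 // => i _; rewrite Lu.1.
have LTu : (L k)^T \in unitmx by rewrite unitmx_tr unitmxE Ldet unitr1.
have PP : P k *m (P k)^T = 1%:M.
  case/existsP: (Pperm k) => s /eqP ->.
  by rewrite tr_perm_mx -perm_mxM mulgV perm_mx1.
have sg0 : 0 < `|sigma_bar|.
  rewrite normr_gt0; apply/eqP => s0; move: s2pos; rewrite /s2 s0 expr0n /=.
  by rewrite ltxx.
have sgs : `|sigma_bar| ^+ 2 = s2 by rewrite real_normK // num_real.
have sL x : sq (L k *m x) <= `|sigma_bar| ^+ 2 * sq x.
  apply: sigma_bound; apply: le_trans (Lsig k) (ler_norm _).
have sLT := LT_bound sg0 sL.
have lam_ge j : tau <= lam k 0 j.
  set q := Q k *m delta_mx j (0 : 'I_1).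
  have sq1 : sq q = 1.
    rewrite -sqE /q trmx_mul mulmxA -(mulmxA _ (Q k)^T) QQ mulmx1 sqE.
    exact: sq_deltaj.
  have lamq : qf (B k) q = lam k 0 j.
    by rewrite BQ /q qf_conj // qf_delta mxE eqxx mulr1n.
  set w := invmx (L k)^T *m q.
  have Lw : (L k)^T *m w = q by rewrite /w mulKVmx.
  set z := (P k)^T *m w.
  have Pz : P k *m z = w by rewrite /z mulmxA PP mul1mx.
  have qfz : qf (Hbar k) z = lam k 0 j by rewrite Hfac qf_fact Pz Lw.
  have sqz : sq z = sq w.
    by rewrite -sqE /z trmx_mul trmxK mulmxA -(mulmxA _ (P k)) PP mulmx1 sqE.
  have h1 : 1 <= s2 * sq w by rewrite -sgs -sq1 -Lw; apply: sLT.
  have h2 := Hlow z; rewrite qfz sqz in h2.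
  have hw := sq_ge0 w.
  have h3 : 0 <= tau * (s2 * sq w - 1) by apply: mulr_ge0; [exact: ltW | lra].
  have h4 : 0 <= sq w * (lmin - tau * (2 * s2)) by apply: mulr_ge0 => //; lra.
  nra.
rewrite /modified_H.
have -> : \row_j Num.max tau `|lam k 0 j| = lam k.
  apply/rowP => j; rewrite mxE.
  rewrite (ger0_norm (le_trans (ltW tau0) (lam_ge j))) (max_r (lam_ge j)).
  by [].
by rewrite Hfac BQ !mulmxA.
Qed.
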